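(* Let $\ell \to r~[\phi]$ be a constrained rewrite rule. Let $p_1,\ldots,p_n$ be the positions such that $\{p_1,\ldots,p_n\} = \{ p \in \mathcal{P}os(\ell) \mid \ell|_p \in \mathrm{Val} \cup \mathcal{V}ar(\phi) \}$, and let $x_1,\ldots,x_n$ be pairwise distinct variables with $\{x_1,\ldots,x_n\} \cap \mathcal{V}ar(\ell,r,\phi) = \emptyset$. Let $\ell' \to r~[\phi']$ be the constrained rule with $\ell' = \ell[x_1,\ldots,x_n]_{p_1,\ldots,p_n}$ (i.e., $\ell|_{p_i}$ replaced by $x_i$ for each $i$) and $\phi' = \phi \land \bigwedge_{i=1}^n (x_i = \ell|_{p_i}) \land \bigwedge_{y \in \mathcal{V}ar(r)\setminus\mathcal{V}ar(\ell,\phi)} (y = y)$. Then ${\to_{\ell \to r~[\phi]}} = {\to_{\ell' \to r~[\phi']}}$.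
   Context: Logically constrained term rewriting (LCTRS) setting. Sorts $\mathcal{S} = \mathcal{S}_{\mathit{theory}} \uplus \mathcal{S}_{\mathit{term}}$; signature $\Sigma = \Sigma_{\mathit{theory}} \cup \Sigma_{\mathit{terms}}$, where every symbol of $\Sigma_{\mathit{theory}}$ has argument and result sorts in $\mathcal{S}_{\mathit{theory}}$. Each theory sort $\iota$ has a nonempty universe $\mathcal{I}(\iota)$, and an interpretation $\mathcal{J}$ assigns to each $f:\iota_1\times\cdots\times\iota_n\to\iota$ in $\Sigma_{\mathit{theory}}$ a function $\mathcal{I}(\iota_1)\times\cdots\times\mathcal{I}(\iota_n)\to\mathcal{I}(\iota)$. For each theory sort $\iota$ there is a set $\mathrm{Val}_\iota\subseteq\Sigma_{\mathit{theory}}$ of value constants on which $\mathcal{J}$ is a bijection onto $\mathcal{I}(\iota)$; $\mathrm{Val}=\bigcup_\iota \mathrm{Val}_\iota$, and $\Sigma_{\mathit{terms}}\cap\Sigma_{\mathit{theory}}\subseteq\mathrm{Val}$. The theory includes sort $\mathsf{bool}$ with values $\mathsf{true},\mathsf{false}$, the usual connectives and $=,\neq$ on each theory sort, interpreted as expected. Theory terms are elements of $T(\Sigma_{\mathit{theory}},\mathcal{V})$; constraints are theory terms of sort $\mathsf{bool}$; $[\![\cdot]\!]$ denotes evaluation of ground theory terms. A substitution $\gamma$ respects a constraint $\phi$ if $x\gamma\in\mathrm{Val}$ for all $x\in\mathcal{V}ar(\phi)$ and $[\![\phi\gamma]\!]=\mathsf{true}$. A constrained rewrite rule $\ell\to r~[\varphi]$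 consists of terms $\ell,r$ of the same sort and a constraint $\varphi$, where $\ell$ is neither a theory term nor a variable. Its logical variables are $\mathcal{LV}ar(\ell\to r~[\varphi]) = \mathcal{V}ar(\varphi)\cup(\mathcal{V}ar(r)\setminus\mathcal{V}ar(\ell))$; a substitution $\gamma$ respects the rule if $x\gamma\in\mathrm{Val}$ for every logical variable $x$ and $[\![\varphi\gamma]\!]=\mathsf{true}$. For a single rule $\rho = \ell\to r~[\varphi]$, $s \to_{\rho} t$ holds iff there are a position $p$ of $s$ and a substitution $\gamma$ respecting $\rho$ with $s|_p=\ell\gamma$ and $t=s[r\gamma]_p$. *)

(* Defs.v *)
From Stdlib Require Import List.
Import ListNotations.
Set Implicit Arguments.

(* The theory universes I(iota) are encoded as predicates [carrier iota] on a
   common carrier type [dom]. *)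
Record lctrs := {
  sort : Type;
  theory_sort : sort -> Prop;              (* S_theory; other sorts are S_term *)
  bool_sort : sort;
  bool_is_theory : theory_sort bool_sort;

  fsym : Type;
  arity : fsym -> list sort;
  res : fsym -> sort;
  theory_sym : fsym -> Prop;
  value : fsym -> Prop;
  theory_sym_sorts : forall f, theory_sym f ->
      theory_sort (res f) /\ Forall theory_sort (arity f);
  value_const : forall v, value v -> theory_sym v /\ arity v = [];

  var : Type;
  vsort : var -> sort;

  dom : Type;
  carrier : sort -> dom -> Prop;
  carrier_nonempty : forall i, theory_sort i -> exists d, carrier i d;
  interp : fsym -> list dom -> dom;        (* J (only meaningful on theory symbols) *)
  interp_sorted : forall f ds, theory_sym f ->
      Forall2 carrier (arity f) ds -> carrier (res f) (interp f ds);
  val_onto : forall i d, theory_sort i ->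
      (carrier i d <-> exists v, value v /\ res v = i /\ interp v [] = d);
  val_inj : forall v w, value v -> value w -> res v = res w ->
      interp v [] = interp w [] -> v = w;

  true_sym : fsym;
  false_sym : fsym;
  true_value : value true_sym /\ res true_sym = bool_sort;
  false_value : value false_sym /\ res false_sym = bool_sort;
  true_false : interp true_sym [] <> interp false_sym [];
  bool_values : forall v, value v -> res v = bool_sort -> v = true_sym \/ v = false_sym;

  and_sym : fsym;
  and_sig : theory_sym and_sym /\ arity and_sym = [bool_sort; bool_sort]
            /\ res and_sym = bool_sort;
  and_spec : forall a b, carrier bool_sort a -> carrier bool_sort b ->
      (interp and_sym [a; b] = interp true_sym [] <->
       a = interp true_sym [] /\ b = interp true_sym []);

  eq_sym : sort -> fsym;
  eq_sig : forall i, theory_sort i ->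
      theory_sym (eq_sym i) /\ arity (eq_sym i) = [i; i] /\ res (eq_sym i) = bool_sort;
  eq_spec : forall i a b, theory_sort i -> carrier i a -> carrier i b ->
      (interp (eq_sym i) [a; b] = interp true_sym [] <-> a = b)
}.

Arguments theory_sort {l} _.
Arguments bool_sort {l}.
Arguments arity {l} _.
Arguments res {l} _.
Arguments theory_sym {l} _.
Arguments value {l} _.
Arguments vsort {l} _.
Arguments carrier {l} _ _.
Arguments interp {l} _ _.
Arguments true_sym {l}.
Arguments false_sym {l}.
Arguments and_sym {l}.
Arguments eq_sym {l} _.

Section Terms.
Variable L : lctrs.

Inductive term : Type :=
| Var : var L -> term
| App : fsym L -> list term -> term.

Definition sort_of (t : term) : sort L :=
  match t with Var x => vsort x | App f _ => res f end.

Fixpoint wf (t : term) : Prop :=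
  match t with
  | Var _ => True
  | App f args => map sort_of args = arity f /\
      (fix wfl (l : list term) : Prop :=
         match l with [] => True | a :: l' => wf a /\ wfl l' end) args
  end.

Fixpoint theory_term (t : term) : Prop :=
  match t with
  | Var x => theory_sort (vsort x)
  | App f args => theory_sym f /\
      (fix tl (l : list term) : Prop :=
         match l with [] => True | a :: l' => theory_term a /\ tl l' end) args
  end.

Fixpoint vars (t : term) : list (var L) :=
  match t with
  | Var x => [x]
  | App _ args => flat_map vars args
  end.

Definition is_value (t : term) : Prop :=
  exists v, value v /\ t = App v [].

Definition subst_ok (g : var L -> term) : Prop :=
  forall x, wf (g x) /\ sort_of (g x) = vsort x.

Fixpoint subst (g : var L -> term) (t : term) : term :=
  match t with
  | Var x => g x
  | App f args => App f (map (subst g) args)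
  end.

(* evaluation [[.]] (only meaningful on ground theory terms; variables are
   sent to an irrelevant default) *)
Fixpoint eval (t : term) : dom L :=
  match t with
  | Var _ => interp true_sym []
  | App f args => interp f (map eval args)
  end.

Definition position := list nat.

Fixpoint subt (t : term) (p : position) : option term :=
  match p with
  | [] => Some t
  | i :: p' =>
      match t with
      | Var _ => None
      | App f args =>
          match nth_error args i with
          | Some u => subt u p'
          | None => None
          end
      end
  end.

Definition is_pos (t : term) (p : position) : Prop := subt t p <> None.

Fixpoint replace (t : term) (p : position) (u : term) : term :=
  match p with
  | [] => u
  | i :: p' =>
      match t with
      | Var _ => t
      | App f args =>
          App f (firstn i args ++
                 match nth_error args i with
                 | Some a => [replace a p' u]
                 | None => []
                 end ++ skipn (S i) args)
      end
  end.

Definition replace_vars (t : term) (ps : list position) (xs : list (var L)) : term :=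
  fold_left (fun s px => replace s (fst px) (Var (snd px))) (combine ps xs) t.

Definition cTrue : term := App true_sym [].
Definition cAnd (a b : term) : term := App and_sym [a; b].
Definition cEq (i : sort L) (a b : term) : term := App (eq_sym i) [a; b].
Definition cBigAnd (cs : list term) : term := fold_right cAnd cTrue cs.

Record rule := mkRule { lhs : term; rhs : term; cstr : term }.

Definition valid_rule (rho : rule) : Prop :=
  wf (lhs rho) /\ wf (rhs rho) /\ sort_of (lhs rho) = sort_of (rhs rho) /\
  wf (cstr rho) /\ theory_term (cstr rho) /\ sort_of (cstr rho) = bool_sort /\
  (exists f args, lhs rho = App f args) /\ ~ theory_term (lhs rho).

Definition logical_var (rho : rule) (x : var L) : Prop :=
  In x (vars (cstr rho)) \/ (In x (vars (rhs rho)) /\ ~ In x (vars (lhs rho))).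

Definition respects (g : var L -> term) (rho : rule) : Prop :=
  (forall x, logical_var rho x -> is_value (g x)) /\
  eval (subst g (cstr rho)) = interp true_sym [].

Definition step (rho : rule) (s t : term) : Prop :=
  exists (p : position) (g : var L -> term),
    subst_ok g /\ respects g rho /\
    subt s p = Some (subst g (lhs rho)) /\
    t = replace s p (subst g (rhs rho)).

End Terms.

Arguments Var {L}.
Arguments App {L}.

(* Main.v *)
Require Import Defs.
From Stdlib Require Import List Classical ClassicalEpsilon.
Import ListNotations.

Section Aux.
Variable L : lctrs.
Notation term := (term L).
Notation T := (@interp L true_sym []).

Lemma nth_split {A} (args : list A) i c :
  nth_error args i = Some c -> args = firstn i args ++ c :: skipn (S i) args.
Proof.
  revert i; induction args as [|a args IH]; intros [|i] H; simpl in *; try discriminate.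
  - inversion H; subst; reflexivity.
  - f_equal; apply IH; exact H.
Qed.

Lemma nth_upd_eq {A} (args : list A) i c x :
  nth_error args i = Some c -> nth_error (firstn i args ++ x :: skipn (S i) args) i = Some x.
Proof.
  revert i; induction args as [|a args IH]; intros [|i] H; simpl in *; try discriminate; auto.
Qed.

Lemma nth_upd_neq {A} (args : list A) i c x j :
  nth_error args i = Some c -> j <> i ->
  nth_error (firstn i args ++ x :: skipn (S i) args) j = nth_error args j.
Proof.
  revert i j; induction args as [|a args IH]; intros [|i] [|j] H Hji; simpl in *;
    try discriminate; try congruence; auto.
Qed.

Lemma in_fs {A} (args : list A) i X w :
  In w (firstn i args ++ X ++ skipn (S i) args) -> In w args \/ In w X.
Proof.
  intro H; apply in_app_or in H; destruct H as [H|H].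
  - left; rewrite <- (firstn_skipn i args); apply in_or_app; left; exact H.
  - apply in_app_or in H; destruct H as [H|H]; auto.
    left; rewrite <- (firstn_skipn (S i) args); apply in_or_app; right; exact H.
Qed.

Fixpoint term_ind2 (P : term -> Prop) (HV : forall x, P (Var x))
  (HA : forall f args, Forall P args -> P (App f args)) (t : term) : P t :=
  match t with
  | Var x => HV x
  | App f args => HA f args ((fix F l := match l return Forall P l with
        | [] => Forall_nil _ | a :: l' => Forall_cons _ (term_ind2 P HV HA a) (F l') end) args)
  end.

Definition leaf (w : term) : Prop :=
  match w with Var _ => True | App _ args => args = [] end.

Lemma subst_subt g (t : term) p u :
  subt t p = Some u -> subt (subst g t) p = Some (subst g u).
Proof.
  revert t; induction p as [|i p IH]; intros t H; simpl in *.
  - inversion H; reflexivity.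
  - destruct t as [x|f args]; [discriminate|]. simpl.
    rewrite nth_error_map. destruct (nth_error args i); simpl; [apply IH; exact H|discriminate].
Qed.

Lemma subst_replace g (t : term) p v a :
  subt t p = Some a -> subst g (replace t p v) = replace (subst g t) p (subst g v).
Proof.
  revert t; induction p as [|i p IH]; intros t H; simpl in *; auto.
  destruct t as [x|f args]; [discriminate|]. cbn [subst replace].
  rewrite nth_error_map. destruct (nth_error args i) eqn:E; [|discriminate]. cbn [option_map].
  f_equal. change (match args with [] => [] | _ :: l => skipn i l end) with (skipn (S i) args). change (match map (subst g) args with [] => [] | _ :: l => skipn i l end) with (skipn (S i) (map (subst g) args)). rewrite !map_app, firstn_map, skipn_map. f_equal. simpl. f_equal.
  eapply IH; exact H.
Qed.

Lemma replace_self (t : term) p u : subt t p = Some u -> replace t p u = t.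
Proof.
  revert t; induction p as [|i p IH]; intros t H; simpl in *.
  - inversion H; reflexivity.
  - destruct t as [x|f args]; [discriminate|].
    destruct (nth_error args i) eqn:E; [|discriminate]. simpl.
    rewrite (IH _ H). f_equal. symmetry. apply nth_split; exact E.
Qed.

Lemma subt_leaf (t : term) p : leaf t -> p <> [] -> subt t p = None.
Proof.
  intros Hl Hp. destruct p as [|i p]; [congruence|]. destruct t; simpl in *; auto.
  subst. destruct i; reflexivity.
Qed.

Lemma subt_replace_other q : forall (t : term) p a b v,
  subt t q = Some a -> leaf a -> subt t p = Some b -> leaf b -> p <> q ->
  subt (replace t q v) p = Some b.
Proof.
  induction q as [|i q IH]; intros t p a b v Ha La Hb Lb Hpq.
  - simpl in Ha. inversion Ha; subst. rewrite subt_leaf in Hb; auto; discriminate.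
  - destruct t as [x|f args]; [discriminate|]. simpl in Ha.
    destruct (nth_error args i) eqn:Ei; [|discriminate].
    destruct p as [|j p].
    + simpl in Hb. inversion Hb; subst. simpl in Lb. subst. destruct i; discriminate.
    + simpl replace. rewrite Ei. simpl. simpl in Hb.
      destruct (PeanoNat.Nat.eq_dec j i) as [->|Hne].
      * rewrite (nth_upd_eq _ _ _ _ Ei). rewrite Ei in Hb.
        eapply IH; eauto. congruence.
      * rewrite (nth_upd_neq _ _ _ _ _ Ei Hne). exact Hb.
Qed.

Lemma vars_replace1 (t : term) p v z :
  In z (vars (replace t p v)) -> In z (vars t) \/ In z (vars v).
Proof.
  revert t; induction p as [|i p IH]; intros t H; simpl in *; auto.
  destruct t as [x|f args]; auto. simpl in H.
  apply in_flat_map in H. destruct H as [w [Hw Hz]].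
  apply in_fs in Hw. destruct Hw as [Hw|Hw].
  - left. simpl. apply in_flat_map. eauto.
  - destruct (nth_error args i) eqn:E; [|destruct Hw].
    destruct Hw as [<-|[]]. apply IH in Hz. destruct Hz as [Hz|Hz]; auto.
    left. simpl. apply in_flat_map. exists t; split; auto. eapply nth_error_In; eauto.
Qed.

Lemma vars_replace2 (t : term) p u v z :
  subt t p = Some u -> In z (vars t) -> In z (vars (replace t p v)) \/ In z (vars u).
Proof.
  revert t; induction p as [|i p IH]; intros t Hs H; simpl in *.
  - inversion Hs; subst; auto.
  - destruct t as [x|f args]; [discriminate|].
    destruct (nth_error args i) eqn:E; [|discriminate].
    simpl in H |- *.
    assert (H' : In z (flat_map (@vars L) (firstn i args ++ t :: skipn (S i) args)))
      by (rewrite <- (nth_split _ _ _ E); exact H).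
    rewrite flat_map_app in H' |- *. simpl in H' |- *.
    apply in_app_or in H'. destruct H' as [H'|H'].
    + left; apply in_or_app; auto.
    + apply in_app_or in H'. destruct H' as [H'|H'].
      * destruct (IH _ Hs H') as [H2|H2]; auto. left; apply in_or_app; right; apply in_or_app; auto.
      * left; apply in_or_app; right; apply in_or_app; auto.
Qed.

Lemma fold_inv (R : term -> Prop) (Q : position -> var L -> term -> Prop)
  (pxs : list (position * var L)) : forall (t : term),
  NoDup (map fst pxs) ->
  (forall p x, In (p, x) pxs -> exists u, subt t p = Some u /\ leaf u /\ Q p x u) ->
  R t ->
  (forall t p x u, R t -> subt t p = Some u -> leaf u -> Q p x u -> R (replace t p (Var x))) ->
  R (fold_left (fun s px => replace s (fst px) (Var (snd px))) pxs t).
Proof.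
  induction pxs as [|[p x] pxs IH]; intros t HN Hin HR Hstep; simpl; auto.
  inversion HN as [|? ? Hnot HN']; subst.
  destruct (Hin p x (or_introl eq_refl)) as [u [Hu [Lu Qu]]].
  apply IH; auto.
  - intros p' x' H'. destruct (Hin p' x' (or_intror H')) as [u' [Hu' [Lu' Qu']]].
    exists u'; split; auto.
    eapply subt_replace_other; eauto.
    intro; subst. apply Hnot. change p with (fst (p, x')). apply in_map; exact H'.
  - eapply Hstep; eauto.
Qed.

Lemma subst_ext (g h : var L -> term) (t : term) :
  (forall x, In x (vars t) -> g x = h x) -> subst g t = subst h t.
Proof.
  induction t as [x|f args IH] using term_ind2; intro H; simpl in *.
  - apply H; auto.
  - f_equal. apply map_ext_in. intros a Ha. rewrite Forall_forall in IH.
    apply IH; auto. intros x Hx; apply H. apply in_flat_map; eauto.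
Qed.

Lemma value_carrier (v : fsym L) : value v -> carrier (res v) (interp v []).
Proof.
  intro Hv. destruct (value_const L v Hv) as [Hts _].
  destruct (theory_sym_sorts L v Hts) as [Hs _].
  apply (val_onto L _ _ Hs). exists v; auto.
Qed.

Lemma true_carrier : carrier bool_sort T.
Proof.
  destruct (true_value L) as [Hv Hr]. rewrite <- Hr. apply value_carrier; auto.
Qed.

Lemma TT (g : var L -> term) (t : term) :
  theory_term t -> wf t -> (forall x, In x (vars t) -> is_value (g x)) -> subst_ok g ->
  carrier (sort_of t) (eval (subst g t)).
Proof.
  induction t as [x|f args IH] using term_ind2; intros Ht Hw Hv Hok.
  - simpl. destruct (Hv x (or_introl eq_refl)) as [v [Hvv Hg]].
    destruct (Hok x) as [_ Hs]. rewrite Hg in *. simpl in Hs. rewrite <- Hs.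
    apply value_carrier; auto.
  - simpl in Ht, Hw |- *. destruct Ht as [Hf Ht]. destruct Hw as [Hm Hw].
    apply interp_sorted; auto. rewrite <- Hm.
    assert (Hv' : forall a, In a args -> forall x, In x (vars a) -> is_value (g x)).
    { intros a Ha x Hx. apply Hv. apply in_flat_map; eauto. }
    clear Hm Hv. induction args as [|a args IHa]; simpl; constructor.
    + inversion IH; subst. destruct Ht as [Ht1 Ht2]; destruct Hw as [Hw1 Hw2].
      apply H1; auto. intros x Hx; apply (Hv' a); simpl; auto.
    + inversion IH; subst. destruct Ht as [Ht1 Ht2]; destruct Hw as [Hw1 Hw2].
      apply IHa; auto. intros b Hb x Hx; apply (Hv' b); simpl; auto.
Qed.

Definition vos (i : sort L) (a : term) := exists v, value v /\ res v = i /\ a = App v [].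

Lemma eqconj i (a b : term) : vos i a -> vos i b ->
  carrier bool_sort (eval (App (eq_sym i) [a; b])) /\
  (eval (App (eq_sym i) [a; b]) = T <-> a = b).
Proof.
  intros [v [Hv [Hr ->]]] [w [Hw [Hr' ->]]]. simpl.
  assert (Hi : theory_sort i).
  { subst i. destruct (value_const L v Hv) as [Hts _]. apply (theory_sym_sorts L v Hts). }
  destruct (eq_sig L i Hi) as [Hts [Har Hres]].
  assert (Cv := value_carrier v Hv). assert (Cw := value_carrier w Hw).
  rewrite Hr in Cv. rewrite Hr' in Cw.
  split.
  - rewrite <- Hres. apply interp_sorted; auto. rewrite Har. repeat constructor; auto.
  - rewrite (eq_spec L i _ _ Hi Cv Cw). split; intro H.
    + f_equal. apply val_inj; auto. congruence.
    + inversion H; auto.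
Qed.

Lemma subst_bigAnd g (cs : list term) : subst g (cBigAnd cs) = cBigAnd (map (subst g) cs).
Proof. induction cs; simpl; auto. rewrite <- IHcs. reflexivity. Qed.

Lemma and_carrier (a b : term) : carrier bool_sort (eval a) -> carrier bool_sort (eval b) ->
  carrier bool_sort (eval (cAnd a b)).
Proof.
  intros Ha Hb. destruct (and_sig L) as [Hts [Har Hres]]. simpl. rewrite <- Hres.
  apply interp_sorted; auto. rewrite Har. repeat constructor; auto.
Qed.

Lemma bigAnd_intro (ds : list term) : (forall d, In d ds -> eval d = T) -> eval (cBigAnd ds) = T.
Proof.
  induction ds as [|d ds IH]; intro H; simpl; auto.
  change (interp and_sym [eval d; eval (cBigAnd ds)] = T).
  rewrite H by (left; auto). rewrite IH by (intros; apply H; right; auto).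
  apply and_spec; auto; apply true_carrier.
Qed.

Lemma bigAnd_carrier (ds : list term) : (forall d, In d ds -> carrier bool_sort (eval d)) ->
  carrier bool_sort (eval (cBigAnd ds)).
Proof.
  induction ds as [|d ds IH]; intro H; simpl.
  - apply true_carrier.
  - apply (and_carrier d (cBigAnd ds)); [apply H; left; auto| apply IH; intros; apply H; right; auto].
Qed.

Lemma bigAnd_elim (ds : list term) : (forall d, In d ds -> carrier bool_sort (eval d)) ->
  eval (cBigAnd ds) = T -> forall d, In d ds -> eval d = T.
Proof.
  induction ds as [|d ds IH]; intros Hc He d' Hd; simpl in *; [destruct Hd|].
  change (interp and_sym [eval d; eval (cBigAnd ds)] = T) in He.
  apply and_spec in He; [|apply Hc; auto|apply bigAnd_carrier; auto].
  destruct He as [He1 He2]. destruct Hd as [<-|Hd]; auto.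
Qed.

Lemma vars_bigAnd (cs : list term) z : In z (vars (cBigAnd cs)) -> exists c, In c cs /\ In z (vars c).
Proof.
  induction cs as [|c cs IH]; simpl; intro H; [destruct H|].
  rewrite app_nil_r in H. apply in_app_or in H. destruct H as [H|H]; eauto.
  destruct (IH H) as [c' [? ?]]; eauto.
Qed.

Lemma vars_bigAnd_rev (cs : list term) c z : In c cs -> In z (vars c) -> In z (vars (cBigAnd cs)).
Proof.
  induction cs as [|c' cs IH]; simpl; intros H Hz; [destruct H|].
  rewrite app_nil_r. apply in_or_app. destruct H as [<-|H]; auto.
Qed.


Fixpoint look (pxs : list (position * var L)) (z : var L) : option position :=
  match pxs with
  | [] => None
  | (p, x) :: rest => if excluded_middle_informative (z = x) then Some p else look rest z
  end.

Lemma look_none pxs z : ~ In z (map snd pxs) -> look pxs z = None.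
Proof.
  induction pxs as [|[p x] pxs IH]; simpl; intro H; auto.
  destruct (excluded_middle_informative (z = x)); [exfalso; apply H; auto|]. apply IH; tauto.
Qed.

Lemma look_exact pxs p x : NoDup (map snd pxs) -> In (p, x) pxs -> look pxs x = Some p.
Proof.
  induction pxs as [|[p0 x0] pxs IH]; simpl; intros HN H; [destruct H|].
  inversion HN as [|? ? Hn HN']; subst.
  destruct (excluded_middle_informative (x = x0)) as [->|Hne].
  - destruct H as [H|H]; [inversion H; auto|].
    exfalso; apply Hn. change x0 with (snd (p, x0)). apply in_map; auto.
  - destruct H as [H|H]; [inversion H; congruence|]. auto.
Qed.

Lemma map_fst_combine {A B} (a : list A) (b : list B) :
  length a = length b -> map fst (combine a b) = a.
Proof.
  revert b; induction a; intros [|y b] H; simpl in *; try discriminate; auto.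
  f_equal; auto.
Qed.

Lemma map_snd_combine {A B} (a : list A) (b : list B) :
  length a = length b -> map snd (combine a b) = b.
Proof.
  revert b; induction a; intros [|y b] H; simpl in *; try discriminate; auto.
  f_equal; auto.
Qed.

Lemma isval_vos g z : subst_ok g -> is_value (g z) -> vos (vsort z) (g z).
Proof.
  intros Hok [v [Hv E]]. exists v. destruct (Hok z) as [_ S]. rewrite E in S |- *.
  simpl in S. auto.
Qed.

Definition Cx (l : term) (px : position * var L) : term :=
  cEq (vsort (snd px)) (Var (snd px))
      (match subt l (fst px) with Some u => u | None => Var (snd px) end).
Definition Cy (y : var L) : term := cEq (vsort y) (Var y) (Var y).

Lemma main (l r phi : term) (ps : list position) (xs ys : list (var L)) :
  valid_rule (mkRule l r phi) ->
  NoDup ps ->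
  (forall p, In p ps <->
     exists u, subt l p = Some u /\
       (is_value u \/ exists x, u = Var x /\ In x (vars phi))) ->
  length xs = length ps ->
  NoDup xs ->
  (forall x, In x xs ->
     ~ In x (vars l) /\ ~ In x (vars r) /\ ~ In x (vars phi)) ->
  (forall p x, In (p, x) (combine ps xs) ->
     exists u, subt l p = Some u /\ vsort x = sort_of u) ->
  NoDup ys ->
  (forall y, In y ys <->
     In y (vars r) /\ ~ In y (vars l) /\ ~ In y (vars phi)) ->
  forall s t : term,
    (step (mkRule l r phi) s t <->
     step (mkRule (replace_vars l ps xs) r
             (cAnd phi (cBigAnd (map (Cx l) (combine ps xs) ++ map Cy ys)))) s t).
Proof.
  intros Hvalid HNps Hps Hlen HNxs Hfresh Hsort HNys Hys s t.
  unfold valid_rule in Hvalid. cbn [lhs rhs cstr] in Hvalid.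
  destruct Hvalid as (Hwl & Hwr & Hsrt & Hwphi & Htphi & Hsphi & _ & _).
  set (pxs := combine ps xs).
  set (cs := map (Cx l) pxs ++ map Cy ys).
  assert (HfN : NoDup (map fst pxs)) by (unfold pxs; rewrite map_fst_combine; auto).
  assert (HsN : map snd pxs = xs) by (unfold pxs; rewrite map_snd_combine; auto).
  assert (HU : forall p x, In (p, x) pxs -> exists u, subt l p = Some u /\ leaf u /\
            vsort x = sort_of u /\ (is_value u \/ exists y, u = Var y /\ In y (vars phi))).
  { intros p x H. destruct (Hsort p x H) as [u [Hu Hs]].
    assert (Hp : In p ps) by (eapply in_combine_l; eauto).
    apply Hps in Hp. destruct Hp as [u' [Hu' Hc]]. rewrite Hu in Hu'; inversion Hu'; subst u'.
    exists u; repeat split; auto.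
    destruct Hc as [[v [Hv ->]]|[y [-> _]]]; simpl; auto. }
  assert (HuV : forall p x u, In (p, x) pxs -> subt l p = Some u ->
            forall z, In z (vars u) -> In z (vars phi)).
  { intros p x u H Hu z Hz. destruct (HU p x H) as [u' [Hu' [_ [_ Hc]]]].
    rewrite Hu in Hu'; inversion Hu'; subst u'.
    destruct Hc as [[v [_ ->]]|[y [-> Hy]]]; simpl in Hz; [destruct Hz|].
    destruct Hz as [<-|[]]; auto. }
  assert (Hvos : forall g, subst_ok g -> (forall z, In z (vars phi) -> is_value (g z)) ->
            forall p x u, In (p, x) pxs -> subt l p = Some u -> vos (vsort x) (subst g u)).
  { intros g Hok Hv p x u H Hu. destruct (HU p x H) as [u' [Hu' [_ [Hs Hc]]]].
    rewrite Hu in Hu'; inversion Hu'; subst u'.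
    destruct Hc as [[v [Hvv ->]]|[y [-> Hy]]].
    - exists v. simpl in Hs |- *. auto.
    - destruct (Hv y Hy) as [w [Hw Hg]]. exists w. simpl. rewrite Hg.
      destruct (Hok y) as [_ Hsy]. rewrite Hg in Hsy. simpl in Hsy, Hs.
      repeat split; auto; congruence. }
  assert (Hl'1 : forall z, In z (vars (replace_vars l ps xs)) -> In z (vars l) \/ In z xs).
  { refine (fold_inv (fun t0 => forall z, In z (vars t0) -> In z (vars l) \/ In z xs)
                     (fun p x u => In x xs) pxs l HfN _ _ _); auto.
    - intros p x H. destruct (HU p x H) as [u [? [? _]]]. exists u; repeat split; auto.
      eapply in_combine_r; eauto.
    - intros t0 p x u HR _ _ Hx z Hz. apply vars_replace1 in Hz.
      destruct Hz as [Hz|[<-|[]]]; auto. }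
  assert (Hl'2 : forall z, In z (vars l) -> ~ In z (vars phi) ->
            In z (vars (replace_vars l ps xs))).
  { intros z Hz Hn.
    refine (fold_inv (fun t0 => In z (vars t0)) (fun p x u => ~ In z (vars u))
              pxs l HfN _ Hz _).
    - intros p x H. destruct (HU p x H) as [u [Hu [Lu _]]]. exists u; repeat split; auto.
      intro; apply Hn; eapply HuV; eauto.
    - intros t0 p x u HR Hs0 _ Hq.
      destruct (vars_replace2 t0 p u (Var x) z Hs0 HR); tauto. }
  assert (Hl'3 : forall g, (forall p x u, In (p, x) pxs -> subt l p = Some u -> g x = subst g u)
            -> subst g (replace_vars l ps xs) = subst g l).
  { intros g Hg.
    refine (fold_inv (fun t0 => subst g t0 = subst g l) (fun p x u => g x = subst g u)
              pxs l HfN _ eq_refl _).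
    - intros p x H. destruct (HU p x H) as [u [Hu [Lu _]]]. exists u; repeat split; auto.
      eapply Hg; eauto.
    - intros t0 p x u HR Hs0 _ Hq. rewrite (subst_replace g t0 p (Var x) u Hs0). simpl.
      rewrite Hq. rewrite (replace_self _ p _ (subst_subt g _ _ _ Hs0)). exact HR. }
  assert (Hcs : forall c, In c cs ->
            (exists p x u, c = Cx l (p, x) /\ In (p, x) pxs /\ subt l p = Some u) \/
            (exists y, c = Cy y /\ In y ys)).
  { intros c Hc. unfold cs in Hc. apply in_app_or in Hc. destruct Hc as [Hc|Hc];
      apply in_map_iff in Hc.
    - destruct Hc as [[p x] [<- Hin]]. left. destruct (HU p x Hin) as [u [Hu _]].
      exists p, x, u; auto.
    - destruct Hc as [y [<- Hin]]. right; eauto. }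
  assert (HsubC : forall g p x u, subt l p = Some u ->
            subst g (Cx l (p, x)) = App (eq_sym (vsort x)) [g x; subst g u]).
  { intros g p x u Hu. unfold Cx. simpl. rewrite Hu. reflexivity. }
  assert (Hphi'v : forall z, In z (vars (cAnd phi (cBigAnd cs))) ->
            In z (vars phi) \/ In z xs \/ In z ys).
  { intros z Hz. simpl in Hz. rewrite app_nil_r in Hz. apply in_app_or in Hz.
    destruct Hz as [Hz|Hz]; auto. apply vars_bigAnd in Hz. destruct Hz as [c [Hc Hz]].
    destruct (Hcs c Hc) as [[p [x [u [-> [Hin Hu]]]]]|[y [-> Hin]]].
    - unfold Cx in Hz. simpl in Hz. rewrite Hu in Hz. destruct Hz as [<-|Hz].
      + right; left. rewrite <- HsN. change x with (snd (p, x)). apply in_map; auto.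
      + rewrite app_nil_r in Hz. left; eapply HuV; eauto.
    - simpl in Hz. destruct Hz as [<-|[<-|[]]]; auto. }
  assert (Hphi'r : forall z, In z (vars phi) \/ In z xs \/ In z ys ->
            In z (vars (cAnd phi (cBigAnd cs)))).
  { intros z Hz. simpl. rewrite app_nil_r. apply in_or_app.
    destruct Hz as [Hz|[Hz|Hz]]; [left; auto|right|right].
    - rewrite <- HsN in Hz. apply in_map_iff in Hz. destruct Hz as [[p x] [Hx Hin]].
      simpl in Hx; subst x.
      apply (vars_bigAnd_rev cs (Cx l (p, z))).
      + unfold cs; apply in_or_app; left; apply in_map; auto.
      + unfold Cx; simpl; auto.
    - apply (vars_bigAnd_rev cs (Cy z)).
      + unfold cs; apply in_or_app; right; apply in_map; auto.
      + unfold Cy; simpl; auto. }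
  split.
  -
    intros [p [g [Hok [[Hlog Hev] [Hs Ht]]]]].
    unfold logical_var in Hlog. cbn [lhs rhs cstr] in Hlog, Hev, Hs, Ht.
    assert (Hvphi : forall z, In z (vars phi) -> is_value (g z)) by (intros; apply Hlog; auto).
    assert (Hvr : forall z, In z (vars r) -> ~ In z (vars l) -> is_value (g z))
      by (intros; apply Hlog; auto).
    set (g' := fun z => match look pxs z with
                        | Some p0 => subst g (match subt l p0 with Some u => u | None => Var z end)
                        | None => g z end).
    assert (Hout : forall z, ~ In z xs -> g' z = g z).
    { intros z Hz. unfold g'. rewrite look_none; auto. rewrite HsN; auto. }
    assert (Hin : forall p0 x u, In (p0, x) pxs -> subt l p0 = Some u -> g' x = subst g u).
    { intros p0 x u H Hu. unfold g'. rewrite (look_exact pxs p0 x); [|rewrite HsN; auto|auto].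
      rewrite Hu. reflexivity. }
    assert (Hfr : forall z, In z (vars l) \/ In z (vars r) \/ In z (vars phi) -> ~ In z xs).
    { intros z Hz Hx. destruct (Hfresh z Hx) as (? & ? & ?). tauto. }
    assert (Hxp : forall x, In x xs -> exists p0, In (p0, x) pxs).
    { intros x Hx. rewrite <- HsN in Hx. apply in_map_iff in Hx.
      destruct Hx as [[p0 x0] [Hx0 H]]. simpl in Hx0; subst x0. eauto. }
    assert (Hok' : subst_ok g').
    { intro z. destruct (classic (In z xs)) as [Hz|Hz].
      - destruct (Hxp z Hz) as [p0 H]. destruct (HU p0 z H) as [u [Hu _]].
        rewrite (Hin p0 z u H Hu).
        destruct (Hvos g Hok Hvphi p0 z u H Hu) as [v [Hv [Hr ->]]].
        simpl. split; auto. split; auto. destruct (value_const L v Hv); auto.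
      - rewrite Hout; auto. }
    assert (Hgx' : forall p0 x u, In (p0, x) pxs -> subt l p0 = Some u -> g' x = subst g' u).
    { intros p0 x u H Hu. rewrite (Hin p0 x u H Hu). apply subst_ext.
      intros z Hz. symmetry; apply Hout, Hfr; right; right; eapply HuV; eauto. }
    assert (HsubL : subst g' (replace_vars l ps xs) = subst g l).
    { rewrite (Hl'3 g' Hgx'). apply subst_ext. intros; apply Hout, Hfr; auto. }
    assert (HsubR : subst g' r = subst g r).
    { apply subst_ext. intros; apply Hout, Hfr; auto. }
    assert (HsubP : subst g' phi = subst g phi).
    { apply subst_ext. intros; apply Hout, Hfr; auto. }
    assert (Hv'' : forall z, In z (vars phi) \/ In z xs \/ In z ys -> is_value (g' z)).
    { intros z [Hz|[Hz|Hz]].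
      - rewrite Hout; auto.
      - destruct (Hxp z Hz) as [p0 H]. destruct (HU p0 z H) as [u [Hu _]].
        rewrite (Hin p0 z u H Hu).
        destruct (Hvos g Hok Hvphi p0 z u H Hu) as [v [Hv [Hr E]]]. exists v; auto.
      - apply Hys in Hz. destruct Hz as (Hz1 & Hz2 & Hz3).
        rewrite Hout; auto. }
    exists p, g'. split; [exact Hok'|]. split; [split|split].
    + intros z Hz. unfold logical_var in Hz. cbn [lhs rhs cstr] in Hz.
      destruct Hz as [Hz|[Hz Hnl']]; [apply Hv''; apply Hphi'v; auto|].
      rewrite Hout by (apply Hfr; auto).
      destruct (classic (In z (vars l))) as [Hl|Hl]; [|apply Hvr; auto].
      destruct (classic (In z (vars phi))) as [Hp|Hp]; [apply Hvphi; auto|].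
      exfalso; apply Hnl'; apply Hl'2; auto.
    + cbn [cstr].
      change (interp and_sym [eval (subst g' phi); eval (subst g' (cBigAnd cs))]
              = interp true_sym []).
      rewrite HsubP, Hev, subst_bigAnd, bigAnd_intro.
      * apply and_spec; auto; apply true_carrier.
      * intros d Hd. apply in_map_iff in Hd. destruct Hd as [c [<- Hc]].
        destruct (Hcs c Hc) as [[p0 [x [u [-> [H Hu]]]]]|[y [-> Hy]]].
        -- rewrite (HsubC g' p0 x u Hu).
           assert (V1 : vos (vsort x) (g' x)).
           { apply isval_vos; auto. apply Hv''. right; left.
             rewrite <- HsN. change x with (snd (p0, x)). apply in_map; auto. }
           assert (V2 : vos (vsort x) (subst g' u)) by (rewrite <- (Hgx' p0 x u H Hu); exact V1).
           apply (eqconj _ _ _ V1 V2).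
           eapply Hgx'; eauto.
        -- unfold Cy. simpl.
           assert (V1 : vos (vsort y) (g' y)) by (apply isval_vos; auto).
           apply (eqconj _ _ _ V1 V1). reflexivity.
    + cbn [lhs]. rewrite HsubL. exact Hs.
    + cbn [rhs]. rewrite HsubR. exact Ht.
  -
    intros [p [g [Hok [[Hlog Hev] [Hs Ht]]]]].
    unfold logical_var in Hlog. cbn [lhs rhs cstr] in Hlog, Hev, Hs, Ht.
    assert (Hv' : forall z, In z (vars phi) \/ In z xs \/ In z ys -> is_value (g z))
      by (intros; apply Hlog; left; apply Hphi'r; auto).
    assert (Hvphi : forall z, In z (vars phi) -> is_value (g z)) by auto.
    assert (Hcv : forall c, In c cs -> exists i a b, subst g c = App (eq_sym i) [a; b] /\
                    vos i a /\ vos i b).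
    { intros c Hc. destruct (Hcs c Hc) as [[p0 [x [u [-> [H Hu]]]]]|[y [-> Hy]]].
      - exists (vsort x), (g x), (subst g u). split; [apply HsubC; auto|]. split.
        + apply isval_vos; auto. apply Hv'. right; left.
          rewrite <- HsN. change x with (snd (p0, x)). apply in_map; auto.
        + eapply Hvos; eauto.
      - exists (vsort y), (g y), (g y). split; [reflexivity|].
        assert (V1 : vos (vsort y) (g y)) by (apply isval_vos; auto). auto. }
    change (interp and_sym [eval (subst g phi); eval (subst g (cBigAnd cs))]
              = interp true_sym []) in Hev.
    assert (Cphi : carrier bool_sort (eval (subst g phi))).
    { rewrite <- Hsphi. apply TT; auto. }
    rewrite subst_bigAnd in Hev.
    assert (Ccs : forall d, In d (map (subst g) cs) -> carrier bool_sort (eval d)).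
    { intros d Hd. apply in_map_iff in Hd. destruct Hd as [c [<- Hc]].
      destruct (Hcv c Hc) as [i [a [b [E [Va Vb]]]]]. rewrite E.
      apply (eqconj _ _ _ Va Vb). }
    apply and_spec in Hev; [|exact Cphi|apply bigAnd_carrier; auto].
    destruct Hev as [Hp Hc].
    assert (Hall := bigAnd_elim _ Ccs Hc).
    assert (Hgx : forall p0 x u, In (p0, x) pxs -> subt l p0 = Some u -> g x = subst g u).
    { intros p0 x u H Hu.
      assert (Hin : In (Cx l (p0, x)) cs) by (unfold cs; apply in_or_app; left; apply in_map; auto).
      assert (E := Hall _ (in_map (subst g) _ _ Hin)).
      rewrite (HsubC g p0 x u Hu) in E.
      assert (V1 : vos (vsort x) (g x)).
      { apply isval_vos; auto. apply Hv'. right; left.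
        rewrite <- HsN. change x with (snd (p0, x)). apply in_map; auto. }
      apply (eqconj _ _ _ V1 (Hvos g Hok Hvphi p0 x u H Hu)). exact E. }
    exists p, g. split; [exact Hok|]. split; [split|split].
    + intros z Hz. unfold logical_var in Hz. cbn [lhs rhs cstr] in Hz.
      destruct Hz as [Hz|[Hz Hnl]]; auto.
      destruct (classic (In z (vars phi))); auto.
      apply Hv'; right; right; apply Hys; auto.
    + exact Hp.
    + cbn [lhs]. rewrite <- (Hl'3 g Hgx). exact Hs.
    + exact Ht.
Qed.

End Aux.

Theorem theorem1 (L : lctrs) (l r phi : term L)
  (ps : list (position)) (xs : list (var L)) (ys : list (var L)) :
  valid_rule (mkRule l r phi) ->
  (* p_1..p_n enumerate { p in Pos(l) | l|_p in Val \cup Var(phi) } *)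
  NoDup ps ->
  (forall p, In p ps <->
     exists u, subt l p = Some u /\
       (is_value u \/ exists x, u = Var x /\ In x (vars phi))) ->
  (* x_1..x_n pairwise distinct, fresh, of the sort of l|_{p_i} *)
  length xs = length ps ->
  NoDup xs ->
  (forall x, In x xs ->
     ~ In x (vars l) /\ ~ In x (vars r) /\ ~ In x (vars phi)) ->
  (forall p x, In (p, x) (combine ps xs) ->
     exists u, subt l p = Some u /\ vsort x = sort_of u) ->
  (* ys enumerates Var(r) \ Var(l, phi) *)
  NoDup ys ->
  (forall y, In y ys <->
     In y (vars r) /\ ~ In y (vars l) /\ ~ In y (vars phi)) ->
  let l' := replace_vars l ps xs in
  let phi' :=
    cAnd phi
      (cBigAnd
         (map (fun px => cEq (vsort (snd px)) (Var (snd px))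
                  (match subt l (fst px) with Some u => u | None => Var (snd px) end))
              (combine ps xs)
          ++ map (fun y => cEq (vsort y) (Var y) (Var y)) ys)) in
  forall s t : term L, wf s ->
    (step (mkRule l r phi) s t <-> step (mkRule l' r phi') s t).
Proof.
  intros H1 H2 H3 H4 H5 H6 H7 H8 H9 l' phi' s t _.
  exact (main L l r phi ps xs ys H1 H2 H3 H4 H5 H6 H7 H8 H9 s t).
Qed.
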